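(* Let $(T,X)$ be an unbounded M-flow, where $T$ is a Hausdorff topological group and $X$ a Hausdorff uniform space (not necessarily compact). Then $(T,X)$ is sensitive to initial conditions on $X$.
   Context: $\mathscr U_X$ is a compatible symmetric uniformity of $X$, $\varepsilon[A]=\{y:\exists a\in A,(a,y)\in\varepsilon\}$. $A\subseteq T$ is syndetic if there is compact $K\subseteq T$ with $Kt\cap A\ne\emptyset$ for all $t$. A point $x$ is a.p. if $\{t:tx\in U\}$ is syndetic for every neighborhood $U$ of $x$. The flow is topologically transitive if $\{t:V\cap tU\ne\emptyset\}\ne\emptyset$ for all nonempty open $U,V$; it is an M-flow if it is topologically transitive and its a.p. points are dense. $(T,X)$ is bounded if for every $\alpha\in\mathscr U_X$ there exist $x_0\in X$ and compact $K\subseteq T$ with $\alpha[Kx_0]=X$; otherwise it is unbounded. $(T,X)$ is sensitive to initial conditions on $X$ if there is $\varepsilon\in\mathscr U_X$ such that for every $x\in X$ and every neighborhood $U$ of $x$ there exist $y\in U$ and $t\in T$ with $(tx,ty)\notin\varepsilon$. *)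

(* Defs.v *)
From HB Require Import structures.
From mathcomp Require Import all_boot all_order all_algebra.
From mathcomp Require Import all_classical all_reals topology.
Set Implicit Arguments. Unset Strict Implicit. Unset Printing Implicit Defensive.
Import Order.TTheory GRing.Theory Num.Theory.
Local Open Scope classical_set_scope.

Definition topological_group (T : topologicalType)
  (mul : T -> T -> T) (inv : T -> T) (e : T) : Prop :=
  [/\ (forall a b c, mul a (mul b c) = mul (mul a b) c),
      (forall a, mul e a = a /\ mul a e = a),
      (forall a, mul (inv a) a = e /\ mul a (inv a) = e),
      continuous (fun p : T * T => mul p.1 p.2)
    & continuous inv].

Definition is_flow (T : topologicalType) (X : topologicalType)
  (mul : T -> T -> T) (e : T) (act : T -> X -> X) : Prop :=
  [/\ continuous (fun p : T * X => act p.1 p.2),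
      (forall x, act e x = x)
    & (forall s t x, act (mul s t) x = act s (act t x))].

Definition ent_image (X : Type) (eps : set (X * X)) (A : set X) : set X :=
  [set y | exists2 a, A a & eps (a, y)].

Definition syndetic (T : topologicalType) (mul : T -> T -> T) (A : set T) :=
  exists K : set T, compact K /\
    forall t, exists2 k, K k & A (mul k t).

Definition ap_point (T X : topologicalType) (mul : T -> T -> T)
  (act : T -> X -> X) (x : X) :=
  forall U, nbhs x U -> syndetic mul [set t | U (act t x)].

Definition top_transitive (T X : topologicalType) (act : T -> X -> X) :=
  forall U V : set X, open U -> open V -> U !=set0 -> V !=set0 ->
    exists t, V `&` (act t @` U) !=set0.

Definition M_flow (T X : topologicalType) (mul : T -> T -> T)
  (act : T -> X -> X) :=
  top_transitive act /\ dense [set x | ap_point mul act x].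

Definition bounded_flow (T : topologicalType) (X : uniformType)
  (act : T -> X -> X) :=
  forall alpha, entourage alpha ->
    exists x0 : X, exists K : set T, compact K /\
      ent_image alpha [set act k x0 | k in K] = setT.

Definition sensitive (T : topologicalType) (X : uniformType)
  (act : T -> X -> X) :=
  exists2 eps, entourage eps &
    forall (x : X) U, nbhs x U ->
      exists y, exists t, U y /\ ~ eps (act t x, act t y).

(* Main.v *)
Require Import Defs.
From mathcomp Require Import all_boot all_order all_algebra.
From mathcomp Require Import all_classical all_reals topology.
From Stdlib Require Import Classical.
Local Open Scope classical_set_scope.

Theorem theorem4 (T : topologicalType) (X : uniformType)
  (mul : T -> T -> T) (inv : T -> T) (e : T) (act : T -> X -> X) :
  topological_group mul inv e ->
  hausdorff_space T ->
  hausdorff_space X ->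
  is_flow mul e act ->
  M_flow mul act ->
  ~ bounded_flow act ->
  sensitive act.
Proof.
move=> [mA me mV _ cinv] _ _ [_ act_e act_m] [ttr dns] nb.
apply: NNPP => nsens; apply: nb => alpha ealpha.
pose b1 := split_ent alpha.
have eb1 : entourage b1 by exact: entourage_split_ent.
pose b2 := split_ent b1.
have eb2 : entourage b2 by exact: entourage_split_ent.
pose b3 := split_ent b2.
have eb3 : entourage b3 by exact: entourage_split_ent.
pose b4 := split_ent b3.
have eb4 : entourage b4 by exact: entourage_split_ent.
pose beta := b4 `&` b4^-1%relation.
have ebeta : entourage beta by exact: entourage_invI.
have b43 : forall a, beta a -> b3 a.
  by move=> a [+ _]; apply: split_ent_subset.
have b32 : forall a, b3 a -> b2 a by move=> a; apply: split_ent_subset.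
have b21 : forall a, b2 a -> b1 a by move=> a; apply: split_ent_subset.
have [x [U [Ux H]]] : exists x U, nbhs x U /\
    forall y t, U y -> beta (act t x, act t y).
  apply: NNPP => hn; apply: nsens; exists beta => // x U Ux.
  apply: NNPP => hn2; apply: hn; exists x, U; split => // y t Uy.
  apply: NNPP => nb2; apply: hn2; exists y, t; split => //.
pose U' := interior U.
have oU' : open U' by exact: open_interior.
have U'x : U' x by exact: nbhs_singleton (nbhs_interior Ux).
have U'U : U' `<=` U by exact: interior_subset.
have [p [U'p app]] : U' `&` [set x | ap_point mul act x] !=set0.
  by apply: dns => //; exists x.
have [K [cK synd]] : syndetic mul [set s | U' (act s p)].
  by apply: app; apply: open_nbhs_nbhs; split.
exists p, (inv @` K); split.
  apply: continuous_compact => //; exact: continuous_subspaceT.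
apply/seteqP; split => // z _.
pose S := xsection (beta^-1%relation) z.
have nS : nbhs z S by apply: nbhs_entourage; exact: entourage_inv.
pose V := interior S.
have oV : open V by exact: open_interior.
have Vz : V z by exact: nbhs_singleton (nbhs_interior nS).
have [t [w [Vw [y U'y tyw]]]] := ttr U' V oU' oV (ex_intro _ x U'x) (ex_intro _ z Vz).
have Swz : beta (w, z).
  by have := interior_subset Vw => /xsectionP.
have [k Kk U'q] := synd t.
have h1 := H _ (inv k) (U'U _ U'q).
have h2 := H _ (inv k) (U'U _ U'p).
have h3 := H _ t (U'U _ U'y).
have h4 := H _ t (U'U _ U'p).
have eq1 : act (inv k) (act (mul k t) p) = act t p.
  by rewrite -act_m mA (proj1 (mV k)) (proj1 (me t)).
rewrite eq1 in h1.
exists (act (inv k) p); first by exists (inv k) => //; exists k.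
rewrite -tyw in Swz.
apply: (@entourage_split _ (act t y)) => //; apply: b21.
- apply: (@entourage_split _ (act t p)) => //.
  + apply: (@entourage_split _ (act (inv k) x)) => //.
      by case: h2 => ? ?.
    by case: h1.
  + apply: (@entourage_split _ (act t x)) => //.
      by case: h4 => ? ?.
    by case: h3.
- by apply: b32; apply: b43.
Qed.
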